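(* Consider the following model. Let $\pi_0\in(0,1)$ and $\sigma\in(0,0.25]$. Let $\psi:[0,1]\to\mathbb{R}$ be non-decreasing with $\psi(0)<\psi(1)$. Define $$\pi_1(1)=\frac{(1+4\sigma)\pi_0}{1+4\sigma\pi_0},\qquad \pi_1(0)=\frac{(1-4\sigma)\pi_0}{1-4\sigma\pi_0},$$ $$\Psi(\sigma,\pi_0)=(0.5+2\sigma\pi_0)\,\psi(\pi_1(1))+(0.5-2\sigma\pi_0)\,\psi(\pi_1(0)),$$ $\Phi(S,\sigma,\pi_0)=0.5+\psi(\pi_0)$ and $\Phi(C,\sigma,\pi_0)=0.5+2\sigma\pi_0+\Psi(\sigma,\pi_0)$. The expert chooses the complex rule $C$ if $\Phi(C,\sigma,\pi_0)\ge\Phi(S,\sigma,\pi_0)$ and the simple rule $S$ otherwise. If $\psi$ is linear or convex, then the expert chooses the complex rule.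
   Context: Interpretation: $\pi_0$ is the common prior probability that the expert is competent; $\pi_1(Y)$ is the posterior after the complex rule leads to the correct ($Y=1$) or incorrect ($Y=0$) action, where $\Pr(Y=1)=0.5+2\sigma\pi_0$ under the complex rule; under the simple rule the posterior is $\pi_0$ and the probability of the correct action is $0.5$. $\psi$ is the expert's reputation payoff as a function of the posterior; $\Phi(r,\sigma,\pi_0)$ is the expected total (accuracy plus reputation) payoff from rule $r$. *)

(* Defs.v *)
From Stdlib Require Import Reals.
Open Scope R_scope.

(* Posterior after correct (Y=1) and incorrect (Y=0) action under the complex rule. *)
Definition pi1_1 (sigma pi0 : R) : R := ((1 + 4 * sigma) * pi0) / (1 + 4 * sigma * pi0).
Definition pi1_0 (sigma pi0 : R) : R := ((1 - 4 * sigma) * pi0) / (1 - 4 * sigma * pi0).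

Definition Psi (psi : R -> R) (sigma pi0 : R) : R :=
  ((1/2) + 2 * sigma * pi0) * psi (pi1_1 sigma pi0)
  + ((1/2) - 2 * sigma * pi0) * psi (pi1_0 sigma pi0).

Inductive rule : Type := Simple | Complex.

Definition Phi (psi : R -> R) (r : rule) (sigma pi0 : R) : R :=
  match r with
  | Simple => (1/2) + psi pi0
  | Complex => (1/2) + 2 * sigma * pi0 + Psi psi sigma pi0
  end.

Definition expert_choice (psi : R -> R) (sigma pi0 : R) : rule :=
  if Rle_dec (Phi psi Simple sigma pi0) (Phi psi Complex sigma pi0)
  then Complex else Simple.

(* psi is only given on [0,1]; properties are required on [0,1]. *)
Definition nondecreasing_on01 (psi : R -> R) : Prop :=
  forall x y, 0 <= x -> x <= y -> y <= 1 -> psi x <= psi y.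

Definition linear_on01 (psi : R -> R) : Prop :=
  exists a b : R, forall x, 0 <= x <= 1 -> psi x = a * x + b.

Definition convex_on01 (psi : R -> R) : Prop :=
  forall x y t, 0 <= x <= 1 -> 0 <= y <= 1 -> 0 <= t <= 1 ->
    psi (t * x + (1 - t) * y) <= t * psi x + (1 - t) * psi y.

(* Main.v *)
Require Import Defs.
From Stdlib Require Import Reals Lra.
Open Scope R_scope.

Theorem corollary1 (pi0 sigma : R) (psi : R -> R) :
  0 < pi0 < 1 ->
  0 < sigma <= 1 / 4 ->
  nondecreasing_on01 psi ->
  psi 0 < psi 1 ->
  (linear_on01 psi \/ convex_on01 psi) ->
  expert_choice psi sigma pi0 = Complex.
Proof.
  intros [H0 H1] [S0 S1] _ _ Hc.
  unfold expert_choice.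
  destruct (Rle_dec _ _) as [_|Hn]; [reflexivity|exfalso; apply Hn; clear Hn].
  unfold Phi, Psi.
  set (u := pi1_1 sigma pi0). set (v := pi1_0 sigma pi0).
  assert (D1 : 0 < 1 + 4 * sigma * pi0) by nra.
  assert (D0 : 0 < 1 - 4 * sigma * pi0) by nra.
  assert (Hsum : (1/2 + 2*sigma*pi0) * u + (1/2 - 2*sigma*pi0) * v = pi0).
  { unfold u, v, pi1_1, pi1_0. field; lra. }
  assert (Hu : 0 <= u <= 1).
  { unfold u, pi1_1. split.
    - apply Rmult_le_pos; [nra| left; apply Rinv_0_lt_compat; lra].
    - apply Rmult_le_reg_r with (1 + 4 * sigma * pi0); [lra|].
      unfold Rdiv; rewrite Rmult_assoc, Rinv_l by lra. nra. }
  assert (Hv : 0 <= v <= 1).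
  { unfold v, pi1_0. split.
    - apply Rmult_le_pos; [nra| left; apply Rinv_0_lt_compat; lra].
    - apply Rmult_le_reg_r with (1 - 4 * sigma * pi0); [lra|].
      unfold Rdiv; rewrite Rmult_assoc, Rinv_l by lra. nra. }
  clearbody u v.
  destruct Hc as [[a [b Hl]] | Hcv].
  - rewrite (Hl pi0), (Hl u), (Hl v) by lra.
    assert (HE : (1/2 + 2*sigma*pi0) * (a*u+b) + (1/2 - 2*sigma*pi0) * (a*v+b)
               = a * ((1/2 + 2*sigma*pi0) * u + (1/2 - 2*sigma*pi0) * v) + b) by field.
    rewrite Hsum in HE. nra.
  - assert (J := Hcv u v (1/2 + 2*sigma*pi0) Hu Hv ltac:(nra)).
    replace (1 - (1/2 + 2*sigma*pi0)) with (1/2 - 2*sigma*pi0) in J by field.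
    rewrite Hsum in J. nra.
Qed.
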